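(* Let $(S,g,h)$ be a finite almost simple $(2,m,n)$-group with Euler characteristic $\chi=-2^as^b$ for some odd prime $s$ and positive integers $a,b$, whose socle is $T=PSL_3(q)$ with $q>2$ a prime power. Then there is a positive integer $c$ and a prime $r$ with $q-1=r^c$.
   Context: A $(2,m,n)$-group is a triple $(G,g,h)$ where $G$ is a finite group, $g\in G$ has order $m$, $h\in G$ has order $n$, $G=\langle g,h\rangle$ and $(gh)^2=1$; its Euler characteristic is $\chi=|G|(\frac1m-\frac12+\frac1n)$. $S$ almost simple with socle $T$ means $T$ is non-abelian simple and $T\leq S\leq\mathrm{Aut}(T)$. *)

(* Defs.v *)
From HB Require Import structures.
From mathcomp Require Import all_boot all_order all_algebra all_fingroup all_solvable all_field.
Set Implicit Arguments. Unset Strict Implicit. Unset Printing Implicit Defensive.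
Import GRing.Theory.
From mathcomp Require Import matrix.

Definition SL3 (F : finFieldType) : {set {'GL_3[F]}} :=
  [set x : {'GL_3[F]} | (\det (GLval x) == 1)%R].

Definition PSL3 (F : finFieldType) := (SL3 F / 'Z(SL3 F))%g.

(* S is almost simple with socle T: T is a non-abelian simple normal subgroup
   of S with trivial centraliser in S (equivalently T <= S <= Aut(T) via conjugation). *)
Definition almost_simple_with_socle (gT : finGroupType) (S T : {group gT}) : Prop :=
  [/\ T <| S, simple T, ~~ abelian T & 'C_S(T) = 1]%g.

(* (S,g,h) is a (2,m,n)-group with m = #[g], n = #[h] *)
Definition two_m_n_group (gT : finGroupType) (S : {group gT}) (g h : gT) : Prop :=
  [/\ g \in S, h \in S, <<[set g; h]>>%g = S & ((g * h) ^+ 2 = 1)%g].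

Definition euler_char (gT : finGroupType) (S : {group gT}) (g h : gT) : rat :=
  (#|S|%:R * ((#[g]%g%:R)^-1 - 2^-1 + (#[h]%g%:R)^-1))%R.

(* Main.v *)
Require Import Defs.
From HB Require Import structures.
From mathcomp Require Import all_boot all_order all_algebra all_fingroup all_solvable all_field.
From mathcomp Require Import zify ring.
Set Implicit Arguments. Unset Strict Implicit. Unset Printing Implicit Defensive.
Import GRing.Theory.

Lemma val_lemma N m n C p : prime p -> coprime p C -> 0 < N -> 0 < m -> 0 < n ->
  N * (m * n - (2 * n + 2 * m)) = C * m * n -> 2 * n + 2 * m < m * n ->
  (N`_p %| m`_p \/ N`_p %| n`_p)%N.
Proof.
move=> pr cpC N0 m0 n0 E lt.
have C0 : 0 < C.
  case: (posnP C) => // C0; rewrite C0 !mul0n in E.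
  have D0 : 0 < m * n - (2 * n + 2 * m) by rewrite subn_gt0.
  by move/eqP: E; rewrite muln_eq0 eqn0Ngt N0 /= eqn0Ngt D0.
have D0 : 0 < m * n - (2 * n + 2 * m) by rewrite subn_gt0.
set i := logn p m; set j := logn p n; set t := minn i j.
have dm : p ^ t %| m by rewrite pfactor_dvdn // geq_minl.
have dn : p ^ t %| n by rewrite pfactor_dvdn // geq_minr.
have dD : p ^ t %| m * n - (2 * n + 2 * m).
  by rewrite dvdn_sub ?dvdn_mulr // dvdn_add // dvdn_mull.
have lD : t <= logn p (m * n - (2 * n + 2 * m)) by rewrite -pfactor_dvdn.
have := congr1 (logn p) E; rewrite lognM // !lognM ?muln_gt0 ?C0 // (logn_coprime cpC) add0n.
rewrite !p_part => Ek.
have [ki|ik] := leqP (logn p N) i.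
  by left; rewrite dvdn_exp2l.
right; rewrite dvdn_exp2l //; rewrite -/i -/j in Ek; rewrite -/j; move: lD Ek ik; rewrite /t; lia.
Qed.


Lemma euler_nat (gT : finGroupType) (S : {group gT}) (g h : gT) (C : nat) :
  0 < C -> euler_char S g h = (- (C%:R))%R ->
  #|S| * (#[g]%g * #[h]%g - (2 * #[h]%g + 2 * #[g]%g)) = (2 * C) * #[g]%g * #[h]%g
  /\ 2 * #[h]%g + 2 * #[g]%g < #[g]%g * #[h]%g.
Proof.
move=> C0; rewrite /euler_char.
have m0 := order_gt0 g; have n0 := order_gt0 h.
move: #|S| #[g]%g #[h]%g m0 n0 => N m n m0 n0 E.
have key : ((N * (2 * n + 2 * m) + 2 * C * m * n)%:R = (N * (m * n))%:R :> rat)%R.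
  have m0' : (m%:R != 0 :> rat)%R by rewrite Num.Theory.pnatr_eq0 -lt0n.
  have n0' : (n%:R != 0 :> rat)%R by rewrite Num.Theory.pnatr_eq0 -lt0n.
  apply/eqP; rewrite -subr_eq0; apply/eqP.
  have -> : ((N * (2 * n + 2 * m) + 2 * C * m * n)%:R - (N * (m * n))%:R =
     2%:R * m%:R * n%:R * (N%:R * (m%:R^-1 - 2^-1 + n%:R^-1) + C%:R) :> rat)%R.
    rewrite !natrD !natrM; field; rewrite m0' n0' //.
  by rewrite E addNr mulr0.
move/eqP: key; rewrite Num.Theory.eqr_nat => /eqP key.
have lt : 2 * n + 2 * m < m * n.
  have P0 : 0 < 2 * C * m * n by rewrite !muln_gt0 C0 m0 n0.
  move: P0 key; set P := 2 * C * m * n; nia.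
split => //; nia.
Qed.

Section Grp.
Local Open Scope group_scope.
Definition noncyc (gT : finGroupType) (G : {set gT}) p :=
  exists x y : gT, [/\ x \in G, y \in G & commute x y] /\ [/\ #[x] = p, #[y] = p & y \notin <[x]>].

Lemma noncyc_Sylow (gT : finGroupType) (G P : {group gT}) p :
  prime p -> p.-Sylow(G) P -> cyclic P -> noncyc G p -> False.
Proof.
move=> pr sylP cP [x [y [[Gx Gy cxy] [ox oy nyx]]]].
have cH : <[x]> \subset 'C(<[y]>) by rewrite cents_cycle.
have HG : <[x]> <*> <[y]> \subset G by rewrite join_subG !cycle_subG Gx Gy.
have pH : p.-group (<[x]> <*> <[y]>).
  rewrite /pgroup (cent_joinEl cH).
  apply: (@pnat_dvd _ (p * p)); last by rewrite pnatM pnat_id.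
  have := mul_cardG <[x]> <[y]>; rewrite -!orderE ox oy => ->.
  exact: dvdn_mulr.
have [z _ sHP] := Sylow_subJ sylP HG pH.
have cPz : cyclic (P :^ z) by rewrite cyclicJ.
have cJ : cyclic (<[x]> <*> <[y]>) := cyclicS sHP cPz.
have := eq_subG_cyclic cJ (joing_subl _ _) (joing_subr _ _).
rewrite -!orderE ox oy eqxx => /eqP exy.
by move: nyx; rewrite exy cycle_id.
Qed.

Lemma noncyc_sub (gT : finGroupType) (G H : {set gT}) p :
  G \subset H -> noncyc G p -> noncyc H p.
Proof.
move=> sGH [x [y [[Gx Gy cxy] [ox oy nyx]]]]; exists x, y.
by split; split=> //; apply: (subsetP sGH).
Qed.

Lemma noncyc_isog (gT hT : finGroupType) (G : {group gT}) (H : {group hT}) p :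
  G \isog H -> noncyc G p -> noncyc H p.
Proof.
move=> /isogP [f injf <-] [x [y [[Gx Gy cxy] [ox oy nyx]]]].
exists (f x), (f y); split; split.
- exact: mem_morphim.
- exact: mem_morphim.
- by rewrite /commute -!morphM // cxy.
- by rewrite order_injm.
- by rewrite order_injm.
apply: contra nyx; rewrite -morphim_cycle // => fy.
have : y \in f @*^-1 (f @* <[x]>) by rewrite mem_morphpre.
by rewrite injmK // cycle_subG.
Qed.

Lemma quot_witness (gT : finGroupType) (G H : {group gT}) p (X Y : gT) :
  H <| G -> prime p -> X \in G -> Y \in G -> X ^+ p \in H -> Y ^+ p \in H ->
  [~ X, Y] \in H -> X \notin H -> (forall k, Y * (X ^+ k)^-1 \notin H) ->
  noncyc (G / H) p.
Proof.
move=> nHG pr GX GY XpH YpH cXY nXH nYH.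
have nG : G \subset 'N(H) := normal_norm nHG.
have NX : X \in 'N(H) := subsetP nG X GX.
have NY : Y \in 'N(H) := subsetP nG Y GY.
have ordp : forall Z, Z \in 'N(H) -> Z ^+ p \in H -> Z \notin H -> #[coset H Z] = p.
  move=> Z NZ ZpH nZH; apply/prime_nt_dvdP => //.
    rewrite order_eq1; apply: contra nZH => /eqP; exact: coset_idr.
  by rewrite order_dvdn -morphX //; apply/eqP; apply: coset_id.
exists (coset H X), (coset H Y); split; split.
- exact: mem_quotient.
- exact: mem_quotient.
- have cN : [~ X, Y] \in 'N(H) := subsetP (normG H) _ cXY.
  rewrite /commute -!morphM // commgC (morphM _ (groupM NY NX) cN).
  have -> : coset_morphism H [~ X, Y] = 1 by apply: coset_id.
  by rewrite mulg1.
- exact: ordp.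
- by apply: ordp => //; have := nYH 0; rewrite expg0 invg1 mulg1.
apply/negP => /cycleP [k ek].
have := nYH k; rewrite (coset_idr _ ) ?groupM ?groupV ?groupX //.
rewrite morphM ?groupV ?groupX // morphV ?groupX // morphX //.
by change (coset H Y * (coset H X ^+ k)^-1 = 1); rewrite ek mulgV.
Qed.

Lemma sylow_cyc (gT : finGroupType) (S : {group gT}) g (p : nat) :
  g \in S -> #|S|`_p %| #[g]`_p -> exists P : {group gT}, p.-Sylow(S) P /\ cyclic P.
Proof.
move=> Sg dv; exists <[g.`_p]>%G; split; last exact: cycle_cyclic.
rewrite pHallE /= -orderE order_constt.
have Sz : g.`_p \in S by rewrite groupX.
rewrite cycle_subG Sz /= eqn_dvd dv andbT partn_dvd //; exact: order_dvdG.
Qed.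


End Grp.

Section Mat.
Variable F : finFieldType.
Local Open Scope ring_scope.

Definition mxn (f : nat -> nat -> F) : 'M[F]_3 := \matrix_(i, j) f (i : nat) (j : nat).

Lemma det_mxn f : \det (mxn f) =
  f 0 0 * (f 1 1 * f 2 2 - f 1 2 * f 2 1) - f 0 1 * (f 1 0 * f 2 2 - f 1 2 * f 2 0)
  + f 0 2 * (f 1 0 * f 2 1 - f 1 1 * f 2 0).
Proof.
rewrite (expand_det_row _ 0) !big_ord_recl big_ord0 /cofactor.
rewrite !(expand_det_row _ 0) !big_ord_recl !big_ord0 /cofactor !det_mx11 !mxE /=.
by rewrite /bump /= ?(addn0, add0n); ring.
Qed.

Lemma mul_mxn f g : mxn f *m mxn g =
  mxn (fun i j => f i 0%N * g 0%N j + f i 1%N * g 1%N j + f i 2%N * g 2%N j).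
Proof.
by apply/matrixP => i j; rewrite !mxE !big_ord_recl big_ord0 !mxE /= /bump /= ?(addn0, add0n) addr0 addrA.
Qed.

Lemma eq_mxn f g : (forall i j, (i < 3)%N -> (j < 3)%N -> f i j = g i j) -> mxn f = mxn g.
Proof. by move=> e; apply/matrixP => i j; rewrite !mxE e. Qed.

Lemma mxnE f (i j : 'I_3) : mxn f i j = f i j.
Proof. by rewrite mxE. Qed.

Definition U (u v : nat) (t : F) := mxn (fun i j => (i == j)%:R + ((i == u) && (j == v))%:R * t).

Arguments U u%_N v%_N t%_R.
Lemma UU t t' : U 0 1 t *m U 0 1 t' = U 0 1 (t + t').
Proof.
rewrite mul_mxn; apply: eq_mxn => - [|[|[|i]]] [|[|[|j]]] //= _ _; ring.
Qed.

Definition mk (M : 'M[F]_3) : {'GL_3[F]} := insubd (1%g : {'GL_3[F]}) M.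

Lemma mkE M : \det M != 0 -> GLval (mk M) = M.
Proof. by move=> d; rewrite /mk val_insubd unitmxE unitfE d. Qed.

Lemma SL3_group_set : group_set (SL3 F).
Proof.
apply/group_setP; split; first by rewrite inE GL_1E det1.
move=> x y; rewrite !inE GL_MxE det_mulmx => /eqP-> /eqP->; by rewrite mulr1.
Qed.
Canonical SL3_group := group SL3_group_set.

Lemma mk_SL M : \det M = 1 -> mk M \in SL3 F.
Proof. by move=> d; rewrite inE mkE d ?oner_neq0. Qed.

Lemma mkM A B : \det A != 0 -> \det B != 0 -> (mk A * mk B)%g = mk (A *m B).
Proof.
move=> dA dB; apply: val_inj; rewrite -[\val _]/(GLval _) -[\val (mk _)]/(GLval _) GL_MxE !mkE // det_mulmx mulf_neq0 //.
Qed.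

Lemma not_central M W : M \in SL3 F -> W \in SL3 F ->
  GLval M *m GLval W != GLval W *m GLval M -> M \notin 'Z(SL3 F)%g.
Proof.
move=> SM SW ne; apply/negP => /centerP [_ c].
have := c W SW; move/(congr1 GLval); rewrite !GL_MxE => e.
by rewrite e eqxx in ne.
Qed.

Lemma scalar_central (l : F) : l ^+ 3 = 1 -> mk (l%:M) \in 'Z(SL3 F)%g.
Proof.
move=> l3; have dl : \det (l%:M : 'M[F]_3) = 1 by rewrite det_scalar l3.
apply/centerP; split; first exact: mk_SL.
move=> W _; apply: val_inj; change (GLval (mk l%:M * W)%g = GLval (W * mk l%:M)%g); rewrite !GL_MxE mkE ?dl ?oner_neq0 //.
by rewrite scalar_mxC.
Qed.

Lemma mk1 : mk 1%:M = 1%g.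
Proof. by apply: val_inj; rewrite [\val _]mkE ?det1 ?oner_neq0. Qed.

Definition D (a b c : F) := mxn (fun i j => (i == j)%:R * nth 0 [:: a; b; c] i).

Lemma DD a b c a' b' c' : D a b c *m D a' b' c' = D (a * a') (b * b') (c * c').
Proof. rewrite mul_mxn; apply: eq_mxn => - [|[|[|i]]] [|[|[|j]]] //= _ _; ring. Qed.

Lemma detD a b c : \det (D a b c) = a * b * c.
Proof. rewrite det_mxn /=; ring. Qed.

Lemma D1 : D 1 1 1 = 1%:M.
Proof. by apply/matrixP => i j; rewrite !mxE; case: i j => [[|[|[|i]]] Hi] [[|[|[|j]]] Hj] //=; rewrite ?mulr1 ?mulr0. Qed.

Lemma mkD_exp a b c k : a * b * c != 0 ->
  (mk (D a b c) ^+ k)%g = mk (D (a ^+ k) (b ^+ k) (c ^+ k)).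
Proof.
move=> nz; elim: k => [|k IH]; first by rewrite expg0 !expr0 D1 mk1.
rewrite expgSr IH mkM ?detD ?DD -?exprS -?exprSr //.
by rewrite -!exprMn expf_neq0.
Qed.

Lemma mkD_inv a b c : a * b * c != 0 ->
  (mk (D a b c))^-1%g = mk (D a^-1 b^-1 c^-1).
Proof.
move=> nz; apply: mulg1_eq; rewrite mkM ?detD // ?DD; last first.
  by rewrite -!invfM invr_eq0.
have [a0 b0 c0] : [/\ a != 0, b != 0 & c != 0].
  by move: nz; rewrite !mulf_eq0 !negb_or => /andP [/andP [-> ->] ->].
by rewrite !mulfV // D1 mk1.
Qed.

Lemma U_entry u v t i j : (U u v t) i j = (i == j :> nat)%:R + ((i == u :> nat) && (j == v :> nat))%:R * t.
Proof. exact: mxnE. Qed.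

Lemma detU u v t : (u < 3)%N -> (v < 3)%N -> u != v -> \det (U u v t) = 1.
Proof.
rewrite det_mxn; case: u => [|[|[|u]]] // _; case: v => [|[|[|v]]] //= _ _; ring.
Qed.

Lemma mx_neq (A B : 'M[F]_3) (i j : 'I_3) : A i j != B i j -> A != B.
Proof. by apply: contra => /eqP ->. Qed.

Lemma neq_diff (x y c : F) : x - y = c -> c != 0 -> x != y.
Proof. by move=> e; apply: contra => /eqP xy; rewrite -e xy subrr. Qed.

Lemma D_noncentral a b c : a * b * c = 1 -> (a != b) || (b != c) ->
  mk (D a b c) \notin 'Z(SL3 F)%g.
Proof.
move=> abc ne.
have SM : mk (D a b c) \in SL3 F by apply: mk_SL; rewrite detD.
case/orP: ne => ne.
- have SW : mk (U 0 1 1) \in SL3 F by apply: mk_SL; rewrite detU.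
  apply: (not_central SM SW); rewrite !mkE ?detD ?detU ?abc ?oner_neq0 //.
  apply: (@mx_neq _ _ 0 1); rewrite !mul_mxn !mxnE /=.
  by apply: (neq_diff (c := a - b)); [ring | rewrite subr_eq0].
- have SW : mk (U 1 2 1) \in SL3 F by apply: mk_SL; rewrite detU.
  apply: (not_central SM SW); rewrite !mkE ?detD ?detU ?abc ?oner_neq0 //.
  apply: (@mx_neq _ _ 1 2); rewrite !mul_mxn !mxnE /=.
  by apply: (neq_diff (c := b - c)); [ring | rewrite subr_eq0].
Qed.

Lemma UU' u v t t' : (u < 3)%N -> (v < 3)%N -> u != v ->
  U u v t *m U u v t' = U u v (t + t').
Proof.
rewrite mul_mxn; case: u => [|[|[|u]]] // _; case: v => [|[|[|v]]] //= _ _;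
  apply: eq_mxn => - [|[|[|i]]] [|[|[|j]]] //= _ _; ring.
Qed.

Lemma U0 u v : U u v 0 = 1%:M.
Proof.
apply/matrixP => i j; rewrite !mxE mulr0 addr0.
by case: i j => [[|[|[|i]]] Hi] [[|[|[|j]]] Hj].
Qed.

Lemma mkU_exp u v t k : (u < 3)%N -> (v < 3)%N -> u != v ->
  (mk (U u v t) ^+ k)%g = mk (U u v (t *+ k)).
Proof.
move=> u3 v3 uv; elim: k => [|k IH]; first by rewrite expg0 mulr0n U0 mk1.
by rewrite expgSr IH mkM ?detU ?oner_neq0 // UU' // mulrSr.
Qed.

Lemma mkU_inv u v t : (u < 3)%N -> (v < 3)%N -> u != v ->
  (mk (U u v t))^-1%g = mk (U u v (- t)).
Proof.
move=> u3 v3 uv; apply: mulg1_eq.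
by rewrite mkM ?detU ?oner_neq0 // UU' // subrr U0 mk1.
Qed.

Definition Z3 := 'Z(SL3_group)%G.

Lemma PSL_witness p X Y : prime p -> X \in SL3 F -> Y \in SL3 F ->
  (X ^+ p)%g \in Z3 -> (Y ^+ p)%g \in Z3 -> [~ X, Y]%g \in Z3 -> X \notin Z3 ->
  (forall k, (Y * (X ^+ k)^-1)%g \notin Z3) -> noncyc (PSL3 F) p.
Proof. exact: (quot_witness (center_normal _)). Qed.

Lemma noncyc_char p : prime p -> p%:R = 0 :> F -> noncyc (PSL3 F) p.
Proof.
move=> pr p0.
have d1 : forall u v t, (u < 3)%N -> (v < 3)%N -> u != v -> \det (U u v t) != 0.
  by move=> u v t u3 v3 uv; rewrite detU ?oner_neq0.
have S1 : forall u v t, (u < 3)%N -> (v < 3)%N -> u != v -> mk (U u v t) \in SL3 F.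
  by move=> u v t u3 v3 uv; apply: mk_SL; rewrite detU.
apply: (@PSL_witness p (mk (U 0 1 1)) (mk (U 0 2 1))) => //; try exact: S1.
- by rewrite mkU_exp // -mulr_natr mul1r p0 U0 mk1 group1.
- by rewrite mkU_exp // -mulr_natr mul1r p0 U0 mk1 group1.
- have -> : commg (mk (U 0 1 1)) (mk (U 0 2 1)) = 1%g; last exact: group1.
  apply/eqP/commgP; rewrite /commute !mkM ?d1 //; congr mk.
  rewrite !mul_mxn; apply: eq_mxn => - [|[|[|i]]] [|[|[|j]]] //= _ _; ring.
- apply: (not_central (S1 0 1 1 _ _ _) (S1 1 0 1 _ _ _)) => //.
  rewrite !mkE ?d1 //; apply: (@mx_neq _ _ 0 0); rewrite !mul_mxn !mxnE /=.
  by apply: (neq_diff (c := 1)); [ring | rewrite oner_neq0].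
move=> k; rewrite mkU_exp // mkU_inv // mkM ?d1 //.
have SM : mk (U 0 2 1 *m U 0 1 (- (1 *+ k))) \in SL3 F.
  by apply: mk_SL; rewrite det_mulmx !detU ?mulr1.
apply: (not_central SM (S1 2 0 1 _ _ _)) => //.
rewrite !mkE ?d1 ?det_mulmx ?mulf_neq0 ?d1 //; apply: (@mx_neq _ _ 0 0).
rewrite !mul_mxn !mxnE /=.
by apply: (neq_diff (c := 1)); [ring | rewrite oner_neq0].
Qed.

Lemma noncyc_diag (z : F) r : prime r -> z ^+ r = 1 -> z != 1 -> z ^+ 3 != 1 ->
  noncyc (PSL3 F) r.
Proof.
move=> pr zr z1 z3.
have z0 : z != 0.
  apply/eqP => e; move: zr; rewrite e expr0n eqn0Ngt prime_gt0 //= => /eqP.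
  by rewrite eq_sym oner_eq0.
have dX : z * z^-1 * 1 = 1 by rewrite mulr1 mulfV.
have dY : z * 1 * z^-1 = 1 by rewrite mulr1 mulfV.
have nzX : z * z^-1 * 1 != 0 by rewrite dX oner_neq0.
have nzY : z * 1 * z^-1 != 0 by rewrite dY oner_neq0.
apply: (@PSL_witness r (mk (D z z^-1 1)) (mk (D z 1 z^-1))) => //.
- by apply: mk_SL; rewrite detD.
- by apply: mk_SL; rewrite detD.
- by rewrite mkD_exp // exprVn zr invr1 expr1n D1 mk1 group1.
- by rewrite mkD_exp // exprVn zr invr1 expr1n D1 mk1 group1.
- have -> : commg (mk (D z z^-1 1)) (mk (D z 1 z^-1)) = 1%g; last exact: group1.
  apply/eqP/commgP; rewrite /commute !mkM ?detD //; congr mk.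
  by rewrite !DD; congr D; rewrite mulrC.
- by apply: D_noncentral => //; rewrite invr_eq1 z1 orbT.
move=> k; rewrite mkD_exp // mkD_inv; last first.
  by rewrite -!exprMn expf_neq0.
rewrite mkM ?detD //; last by rewrite !mulf_neq0 ?invr_eq0 ?expf_neq0 ?oner_neq0 ?invr_eq0.
rewrite DD expr1n invr1 mulr1 mul1r exprVn invrK.
apply: D_noncentral.
  by field; rewrite z0 expf_neq0.
case: (eqVneq (z ^+ k) z^-1) => [e|]; last by rewrite orbT.
rewrite e invrK /= orbF; apply: contra z3 => /eqP e2.
apply/eqP; rewrite exprS expr2 e2 mulfV //.
Qed.

Definition Pm := mxn (fun i j => (i == (if j == 2 then 0 else j.+1))%:R).
Definition Sc (l : F) := mxn (fun i j => (i == j)%:R * l).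

Lemma ScE l : Sc l = l%:M.
Proof.
apply/matrixP => i j; rewrite !mxE; case: i j => [[|[|[|i]]] Hi] [[|[|[|j]]] Hj] //=;
  by rewrite ?mul1r ?mul0r.
Qed.

Lemma detPm : \det Pm = 1.
Proof. rewrite det_mxn /=; ring. Qed.

Lemma noncyc_three (w : F) : w ^+ 3 = 1 -> w != 1 -> noncyc (PSL3 F) 3.
Proof.
move=> w3 w1.
have w0 : w != 0.
  by apply/eqP => e; move: w3; rewrite e expr0n /= => /eqP; rewrite eq_sym oner_eq0.
have dX : 1 * w * w ^+ 2 = 1 by rewrite mul1r -exprS.
have nzX : 1 * w * w ^+ 2 != 0 by rewrite dX oner_neq0.
have nP : \det Pm != 0 by rewrite detPm oner_neq0.
have SX : mk (D 1 w (w ^+ 2)) \in SL3 F by apply: mk_SL; rewrite detD.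
apply: (@PSL_witness 3 (mk (D 1 w (w ^+ 2))) (mk Pm)) => //.
- by apply: mk_SL; rewrite detPm.
- rewrite mkD_exp // expr1n -exprM mulnC exprM w3 expr1n D1 mk1; exact: group1.
- rewrite !expgS expg0 mulg1 !mkM ?det_mulmx ?nP ?mulf_neq0 //.
  have -> : Pm *m (Pm *m Pm) = 1%:M.
    rewrite -(ScE 1) !mul_mxn; apply: eq_mxn => - [|[|[|i]]] [|[|[|j]]] //= _ _; ring.
  rewrite mk1; exact: group1.
- have -> : commg (mk (D 1 w (w ^+ 2))) (mk Pm) = mk (Sc w).
    apply: (@mulgI _ (mulg (mk Pm) (mk (D 1 w (w ^+ 2))))); rewrite -commgC.
    have hD : \det (D 1 w (w ^+ 2)) != 0 by rewrite detD.
    have hS : \det (Sc w) != 0 by rewrite ScE det_scalar w3 oner_neq0.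
    rewrite !mkM ?hD ?nP ?hS ?det_mulmx ?mulf_neq0 //.
    congr mk; rewrite !mul_mxn; apply: eq_mxn => - [|[|[|i]]] [|[|[|j]]] //= _ _; ring: w3.
  by rewrite ScE; apply: scalar_central.
- by apply: D_noncentral => //; rewrite eq_sym w1.
move=> k; rewrite mkD_exp // mkD_inv; last by rewrite -!exprMn expf_neq0.
rewrite mkM ?nP ?detD //; last by rewrite !mulf_neq0 ?invr_eq0 ?expf_neq0 ?oner_neq0.
have SM : mk (Pm *m D (1 ^+ k)^-1 (w ^+ k)^-1 (w ^+ 2 ^+ k)^-1) \in SL3 F.
  apply: mk_SL; rewrite det_mulmx detPm detD mul1r.
  by rewrite -!invfM -!exprMn dX expr1n invr1.
apply: (not_central SM SX).
rewrite !mkE ?det_mulmx ?detD ?nP ?mulf_neq0 ?invr_eq0 ?expf_neq0 ?oner_neq0 //.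
apply: (@mx_neq _ _ 1 0); rewrite !mul_mxn !mxnE /= expr1n invr1.
by apply: (neq_diff (c := 1 - w)); [ring | rewrite subr_eq0 eq_sym].
Qed.
End Mat.


Theorem lemma5p6 (F : finFieldType) (gT : finGroupType) (S T : {group gT}) (g h : gT)
  (a b s : nat) :
  2 < #|F| ->
  two_m_n_group S g h ->
  almost_simple_with_socle S T ->
  (T \isog PSL3 F)%g ->
  prime s -> odd s -> 0 < a -> 0 < b ->
  euler_char S g h = (- ((2 ^ a * s ^ b)%N)%:R)%R ->
  exists c r : nat, [/\ 0 < c, prime r & #|F| - 1 = r ^ c].
Proof.
move=> q2 [gS hS _ _] [nTS _ _ _] iso prs odds a0 b0 E.
have iso' : ((SL3_group F) / (Z3 F))%G \isog T by rewrite isog_sym; exact: iso.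
have key : forall p, prime p -> odd p -> p != s -> noncyc (PSL3 F) p -> False.
  move=> p pp op ps nc.
  have C0 : 0 < 2 ^ a * s ^ b by rewrite muln_gt0 !expn_gt0 (prime_gt0 prs).
  have [E1 lt] := euler_nat C0 E.
  have cp : coprime p (2 * (2 ^ a * s ^ b)).
    have p2 : ~~ (p %| 2) by rewrite dvdn_prime2 //; apply: contraL op => /eqP ->.
    have p_s : ~~ (p %| s) by rewrite dvdn_prime2.
    by rewrite !coprimeMr !coprimeXr // !prime_coprime // p2.
  have ncT : noncyc T p := noncyc_isog iso' nc.
  have ncS : noncyc S p := noncyc_sub (normal_sub nTS) ncT.
  case: (val_lemma pp cp (cardG_gt0 S) (order_gt0 g) (order_gt0 h) E1 lt) => dv.
    by have [P [sP cP]] := sylow_cyc gS dv; exact: noncyc_Sylow pp sP cP ncS.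
  by have [P [sP cP]] := sylow_cyc hS dv; exact: noncyc_Sylow pp sP cP ncS.
have [p0 pp0 ch0] := finPcharP F.
have p0_2s : p0 = 2 \/ p0 = s.
  case: (even_prime pp0) => [->|op0]; first by left.
  case: (eqVneq p0 s) => [->|ne]; first by right.
  by exfalso; apply: (key p0 pp0 op0 ne); apply: noncyc_char pp0 (GRing.pcharf0 ch0).
have qF0 : ((#|F|%:R : F) = 0)%R.
  by have := expg_cardG (in_setT (1 : F)%R); rewrite FinRing.zmodXgE cardsT.
have p0q1 : ~~ (p0 %| #|F|.-1).
  rewrite (GRing.dvdn_pcharf ch0).
  apply/negP => /eqP h0.
  have h1 : ((#|F|.-1.+1)%:R = 0 :> F)%R by rewrite prednK; [exact: qF0 | lia].
  by move: h1; rewrite -natr1 h0 add0r => /eqP; rewrite oner_eq0.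
have prq : forall r, prime r -> r %| #|F|.-1 -> r = 2 \/ r = s.
  move=> r pr rd.
  have rd' : r %| #|[set: {unit F}]%G| by rewrite card_finField_unit.
  have [u _ ou] := Cauchy pr rd'.
  set z := FinRing.uval u.
  have zk : forall k, (z ^+ k = 1)%R -> r %| k.
    move=> k zk; rewrite -ou order_dvdn; apply/eqP; apply: val_inj.
    by rewrite FinRing.val_unitX.
  have zr : (z ^+ r = 1)%R.
    by rewrite -FinRing.val_unitX -ou expg_order.
  have z1 : z != 1%R.
    apply/negP => /eqP z1; have := zk 1%N; rewrite expr1 => /(_ z1).
    by rewrite dvdn1 => /eqP r1; rewrite r1 in pr.
  case: (even_prime pr) => [->|or]; first by left.
  case: (eqVneq r s) => [->|rs]; first by right.
  exfalso; apply: (key r pr or rs).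
  case: (eqVneq r 3) => [r3|r3].
    by rewrite r3 in zr *; exact: noncyc_three zr z1.
  apply: (noncyc_diag pr zr z1); apply/negP => /eqP z3.
  by have := zk 3 z3; rewrite dvdn_prime2 // (negPf r3).
have n1 : 1 < #|F|.-1 by lia.
have [t pt allt] : exists2 t, prime t & forall r, prime r -> r %| #|F|.-1 -> r = t.
  case: p0_2s => e0.
  - exists s => // r pr rd; case: (prq r pr rd) => // r2.
    by move: p0q1; rewrite e0 -r2 rd.
  - exists 2 => // r pr rd; case: (prq r pr rd) => // r2.
    by move: p0q1; rewrite e0 -r2 rd.
have tn : t.-nat #|F|.-1.
  apply/pnatP => [|r pr rd]; first lia.
  by rewrite (allt r pr rd) inE.
exists (logn t #|F|.-1), t; split => //.
  rewrite -(part_pnat_id tn) p_part in n1.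
  by case: (logn t _) n1 => //; rewrite expn0.
by rewrite subn1 -p_part part_pnat_id.
Qed.
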